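(* Let $I$ be a finite tree and let $\Sigma$ be a morphism of $R_0(I)$ from an orientation $\Gamma$ to itself which is not the identity. Then every reduced expression for $\Sigma$ contains $\Sigma_i$ for every vertex $i\in I$.
   Context: Let $I$ be a finite tree. $\mathrm{Quiv}(I)$ is the set of orientations of $I$. For $\Gamma\in\mathrm{Quiv}(I)$ and a source or sink $i$ of $\Gamma$, $s_i\Gamma$ is the orientation obtained by reversing all arrows at $i$. The groupoid $R_0(I)$ has object set $\mathrm{Quiv}(I)$ and is generated by elementary isomorphisms $\Sigma_i:\Gamma\to s_i\Gamma$ (for each $\Gamma$ and each source or sink $i$ of $\Gamma$) subject to the relations, whenever both sides are defined: (R1) $\Sigma_i^2=1$; (R2) $\Sigma_i\Sigma_j=\Sigma_j\Sigma_i$ when $i,j$ are not adjacent. An expression for a morphism $\Sigma$ is a composable word $\Sigma_{i_1}\cdots\Sigma_{i_r}$ equal to $\Sigma$; $\ell(\Sigma)$ is the minimal length of an expression, and an expression of length $\ell(\Sigma)$ is called reduced. *)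

(* Defs.v *)
From mathcomp Require Import all_boot.
From Stdlib Require Import Relations.Relation_Operators.
Set Implicit Arguments. Unset Strict Implicit. Unset Printing Implicit Defensive.

Section Defs.
Variable T : finType.

Definition is_tree (adj : rel T) : Prop :=
  [/\ 0 < #|T|,
      symmetric adj,
      irreflexive adj,
      (forall i j : T, connect adj i j) &
      (forall (x : T) (p : seq T), uniq (x :: p) -> 2 <= size p ->
          path adj x p -> ~~ adj (last x p) x)].

(* An orientation is the set of its arrows (i,j) meaning i -> j;
   each edge gets exactly one direction. *)
Definition is_orientation (adj : rel T) (G : {set T * T}) : Prop :=
  (forall i j, (i, j) \in G -> adj i j) /\
  (forall i j, adj i j -> ((i, j) \in G) (+) ((j, i) \in G)).

Definition is_source (G : {set T * T}) (i : T) : bool := [forall j, (j, i) \notin G].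
Definition is_sink (G : {set T * T}) (i : T) : bool := [forall j, (i, j) \notin G].
Definition source_or_sink (G : {set T * T}) (i : T) : bool := is_source G i || is_sink G i.

Definition reflect_at (G : {set T * T}) (i : T) : {set T * T} :=
  [set e : T * T | if (e.1 == i) || (e.2 == i) then (e.2, e.1) \in G else e \in G].

(* A word w = [:: i1; ...; ir], applied from the left: first Sigma_{i1} at G,
   then Sigma_{i2} at s_{i1} G, etc.  valid = composable. *)
Fixpoint valid (G : {set T * T}) (w : seq T) : bool :=
  if w is i :: w' then source_or_sink G i && valid (reflect_at G i) w' else true.

Definition endpt (G : {set T * T}) (w : seq T) : {set T * T} := foldl reflect_at G w.

Inductive rstep (adj : rel T) (G : {set T * T}) : seq T -> seq T -> Prop :=
| rstep_R1 (p q : seq T) (i : T) :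
    valid G (p ++ i :: i :: q) -> rstep adj G (p ++ i :: i :: q) (p ++ q)
| rstep_R2 (p q : seq T) (i j : T) :
    ~~ adj i j -> valid G (p ++ i :: j :: q) -> valid G (p ++ j :: i :: q) ->
    rstep adj G (p ++ i :: j :: q) (p ++ j :: i :: q).

(* Two composable words from G define the same morphism of R_0(I). *)
Definition req (adj : rel T) (G : {set T * T}) : seq T -> seq T -> Prop :=
  clos_refl_sym_trans (seq T) (rstep adj G).

End Defs.

(* Main.v *)
Require Import Defs.
From mathcomp Require Import all_boot.
From mathcomp Require Import all_algebra zify.
From Stdlib Require Import Relations.Relation_Operators FunctionalExtensionality.
Set Implicit Arguments. Unset Strict Implicit. Unset Printing Implicit Defensive.
Import GRing.Theory Num.Theory.

Section Proof.
Variable T : finType.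
Variable adj : rel T.
Local Open Scope ring_scope.
Implicit Types (H : {set T * T}) (c : T -> int) (w p q : seq T) (a b x : T).

Definition sgn (H : {set T * T}) (a : T) : int := if is_sink H a then 1 else -1.
Definition upd (c : T -> int) (a : T) (s : int) : T -> int :=
  fun x => if x == a then c x + s else c x.
Fixpoint final (H : {set T*T}) (c : T -> int) (w : seq T) : T -> int :=
  if w is a :: w' then final (reflect_at H a) (upd c a (sgn H a)) w' else c.
Definition dist (c : T -> int) : nat := (\sum_(x : T) `|c x|%N)%N.
Fixpoint mu H c w : nat :=
  if w is a :: w' then (dist (upd c a (sgn H a)) + mu (reflect_at H a) (upd c a (sgn H a)) w')%N
  else 0%N.
Definition up (c : T -> int) a (s : int) : Prop := (0 <= c a /\ s = 1) \/ (c a <= 0 /\ s = -1).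
Definition down (c : T -> int) a (s : int) : Prop := (1 <= c a /\ s = -1) \/ (c a <= -1 /\ s = 1).

Lemma dist_upd c a s : (dist (upd c a s) + `|c a|%N = dist c + `|(c a + s)%R|%N)%N.
Proof.
rewrite /dist (bigD1 a) //= (bigD1 a (P := predT)) //= /upd eqxx.
have -> : (\sum_(i | predT i && (i != a)) `|(if i == a then (c i + s)%R else c i)|%N =
          \sum_(i | predT i && (i != a)) `|c i|%N)%N.
  by apply: eq_bigr => x /negbTE ->.
rewrite [X in (_ + X + _)%N](_ : _ = \sum_(i | i != a) `|c i|%N)%N //; lia.
Qed.

Lemma dist_up c a s : up c a s -> dist (upd c a s) = (dist c).+1.
Proof. move=> H; have := dist_upd c a s; case: H => [][h ->]; lia. Qed.

Lemma dist_down c a s : down c a s -> (dist (upd c a s)).+1 = dist c.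
Proof. move=> H; have := dist_upd c a s; case: H => [][h ->]; lia. Qed.

Lemma up_or_down c a (H : {set T * T}) : up c a (sgn H a) \/ down c a (sgn H a).
Proof.
rewrite /up /down /sgn; case: (is_sink H a).
- have : (0 <= c a) \/ (c a <= -1) by lia.
  by case=> h; [left; left | right; right].
- have : (c a <= 0) \/ (1 <= c a) by lia.
  by case=> h; [left; right | right; left].
Qed.

Lemma endpt_cat H p q : endpt H (p ++ q) = endpt (endpt H p) q.
Proof. by rewrite /endpt foldl_cat. Qed.

Lemma valid_cat H p q : valid H (p ++ q) = valid H p && valid (endpt H p) q.
Proof. by elim: p H => [|a p IH] H //=; rewrite IH andbA. Qed.

Lemma final_cat H c p q : final H c (p ++ q) = final (endpt H p) (final H c p) q.
Proof. by elim: p H c => [|a p IH] H c //=. Qed.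

Lemma mu_cat H c p q : mu H c (p ++ q) = (mu H c p + mu (endpt H p) (final H c p) q)%N.
Proof. by elim: p H c => [|a p IH] H c //=; rewrite IH addnA. Qed.

Lemma reflectK H a : reflect_at (reflect_at H a) a = H.
Proof.
apply/setP => -[u v]; rewrite !inE /=.
by case: (u == a); case: (v == a).
Qed.

Lemma reflectC H a b : reflect_at (reflect_at H a) b = reflect_at (reflect_at H b) a.
Proof.
apply/setP => -[u v]; rewrite !inE /=.
by case: (u == a); case: (v == a); case: (u == b); case: (v == b).
Qed.

Hypothesis adj_sym : symmetric adj.

Lemma orient_reflect H a : is_orientation adj H -> is_orientation adj (reflect_at H a).
Proof.
case=> h1 h2; split.
- move=> i j; rewrite inE /=; case: ifP => _ h; last exact: h1.
  by rewrite adj_sym; apply: h1.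
- move=> i j /h2; rewrite !inE /= [(j == a) || _]orbC.
  by case: ifP => _ //; rewrite addbC.
Qed.

Lemma orient_endpt H w : is_orientation adj H -> is_orientation adj (endpt H w).
Proof. by elim: w H => [|a w IH] H //= o; apply: IH; apply: orient_reflect. Qed.

Lemma sinkP H a j : is_sink H a -> (a, j) \notin H.
Proof. by move/forallP. Qed.

Lemma srcP H a j : is_source H a -> (j, a) \notin H.
Proof. by move/forallP. Qed.

Definition eps (H : {set T * T}) (a b : T) : int := if (b, a) \in H then 1 else 0.

Lemma edge_inv a b w H c : is_orientation adj H -> valid H w -> adj a b ->
  a != b ->
  final H c w a - final H c w b = c a - c b + eps H a b - eps (endpt H w) a b.
Proof.
move=> + + ab nab; elim: w H c => [|x w IH] H c o /=.
  by move=> _; rewrite /eps; lia.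
case/andP => sx vw; rewrite IH //; last exact: orient_reflect.
have [_ ox] := o.
have X := ox _ _ ab.
rewrite /upd /eps /sgn /=.
have ba : (b, a) \in reflect_at H x = (if (b == x) || (a == x) then (a, b) \in H else (b, a) \in H).
  by rewrite inE.
rewrite ba; clear ba.
have nba : (b == a) = false by rewrite eq_sym (negbTE nab).
case: (eqVneq x a) => [e|ax]; [subst x|]; rewrite ?eqxx ?nba ?orbT /=.
  move: sx; rewrite /source_or_sink; case sk: (is_sink H a).
    by move: (sinkP b sk) X; case: ((a,b) \in H); case: ((b,a) \in H) => //= _ _; lia.
  rewrite orbF => sr; move: (srcP b sr) X.
  by case: ((a,b) \in H); case: ((b,a) \in H) => //= _ _; lia.
rewrite ?orbF.
case: (eqVneq b x) => [e|bx]; [subst x|]; rewrite ?eqxx /=.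
  move: sx; rewrite /source_or_sink; case sk: (is_sink H b).
    by move: (sinkP a sk) X; case: ((a,b) \in H); case: ((b,a) \in H) => //= _ _; lia.
  rewrite orbF => sr; move: (srcP a sr) X.
  by case: ((a,b) \in H); case: ((b,a) \in H) => //= _ _; lia.
by [].
Qed.


Lemma notin_nonadj H x a : is_orientation adj H -> ~~ adj x a -> ((x, a) \notin H) && ((a, x) \notin H).
Proof.
case=> h1 _ nxa; apply/andP; split; apply/negP => /h1 //.
  by apply/negP.
by rewrite adj_sym; apply/negP.
Qed.

Lemma sink_other H a x : is_orientation adj H -> ~~ adj x a -> x != a ->
  is_sink (reflect_at H a) x = is_sink H x.
Proof.
move=> o nxa xa; have /andP[n1 n2] := notin_nonadj o nxa.
apply: eq_forallb => j; rewrite inE /= (negbTE xa) /=.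
by case: (eqVneq j a) => [->|]; rewrite ?n1 ?n2.
Qed.

Lemma source_other H a x : is_orientation adj H -> ~~ adj x a -> x != a ->
  is_source (reflect_at H a) x = is_source H x.
Proof.
move=> o nxa xa; have /andP[n1 n2] := notin_nonadj o nxa.
apply: eq_forallb => j; rewrite inE /= (negbTE xa) orbF /=.
by case: (eqVneq j a) => [->|]; rewrite ?n1 ?n2.
Qed.

Lemma find_peak w H c x : valid H (x :: w) -> up c x (sgn H x) ->
  (dist (final H c (x :: w)) <= dist c)%N ->
  exists p a b q, x :: w = p ++ a :: b :: q /\
   up (final H c p) a (sgn (endpt H p) a) /\
   down (upd (final H c p) a (sgn (endpt H p) a)) b (sgn (reflect_at (endpt H p) a) b).
Proof.
elim: w H c x => [|y w IH] H c x /=.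
  by move=> _ /dist_up ->; rewrite ltnn.
case/andP => sx vw upx hd.
case: (up_or_down (upd c x (sgn H x)) y (reflect_at H x)) => [upy|dny].
  have [] := IH (reflect_at H x) (upd c x (sgn H x)) y vw upy.
    by rewrite (dist_up upx); apply: leqW.
  move=> p [a [b [q [E [U D]]]]].
  by exists (x :: p), a, b, q; rewrite E.
by exists [::], x, y, w.
Qed.

Definition z0 : T -> int := fun _ => 0.

Lemma dist0 c : (forall z, c z = 0) -> dist c = 0%N.
Proof. by move=> h; rewrite /dist big1 // => z _; rewrite h. Qed.

Lemma eps_bound H a b : 0 <= eps H a b <= 1.
Proof. by rewrite /eps; case: ifP. Qed.

Lemma down_upd_other c a s b s' : b != a -> down (upd c a s) b s' -> down c b s'.
Proof. by move=> nba; rewrite /down /upd (negbTE nba). Qed.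

Lemma arith_peak (e1 e2 ca cb : int) : 0 <= e1 <= 1 -> 0 <= e2 <= 1 ->
  ca - cb = 0 - 0 + e1 - e2 -> (1 <= ca /\ cb <= -1) \/ (ca <= -1 /\ 1 <= cb) -> False.
Proof. move=> ? ? ? [[? ?]|[? ?]]; lia. Qed.

Lemma step_lemma G w : is_orientation adj G -> valid G w ->
  (forall z, final G z0 w z = 0) -> w != [::] ->
  exists w', rstep adj G w w' /\ valid G w' /\ (forall z, final G z0 w' z = 0) /\
    ((size w' < size w)%N \/ (size w' = size w /\ (mu G z0 w' < mu G z0 w)%N)).
Proof.
move=> oG; case: w => [//|x w0] vw fw _.
have ux : up z0 x (sgn G x) by rewrite /up /z0 /sgn; case: is_sink; [left|right].
have [] := find_peak vw ux.
  by rewrite (dist0 fw) (dist0 (c := z0)).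
move=> p [a [b [q [E [U D]]]]].
rewrite E in vw fw *.
set H0 := endpt G p in U D; set c0 := final G z0 p in U D.
move: (vw); rewrite valid_cat => /andP[vp]; rewrite -/H0 /= => /and3P[sa sb vq].
have oH0 : is_orientation adj H0 := orient_endpt _ oG.
case: (eqVneq a b) => [eab|nab].
  subst b. exists (p ++ q); split; first exact: rstep_R1.
  have Eu : upd (upd c0 a (sgn H0 a)) a (sgn (reflect_at H0 a) a) = c0.
    apply: functional_extensionality => z; rewrite /upd.
    case: (eqVneq z a) => [->|] //; rewrite ?eqxx.
    move: U D; rewrite /up /down /upd eqxx; lia.
  split; first by rewrite valid_cat vp /= -/H0; move: vq; rewrite reflectK.
  split; first by move=> z; rewrite -(fw z) !final_cat /= -/H0 -/c0 Eu reflectK.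
  by left; rewrite !size_cat /=; lia.
have nba : b != a by rewrite eq_sym.
have nadj : ~~ adj a b.
  apply/negP => ab.
  have := @edge_inv a b (p ++ [:: a]) G z0 oG _ ab nab.
  rewrite valid_cat vp /= -/H0 sa => /(_ isT).
  rewrite final_cat endpt_cat /= -/H0 -/c0 /upd eqxx (negbTE nba) /z0 => Einv.
  apply: (arith_peak (eps_bound G a b) (eps_bound (reflect_at H0 a) a b) Einv).
  have [_ ox] := oH0; have X := ox _ _ ab.
  move: U D sb; rewrite /up /down /sgn /upd (negbTE nba) /source_or_sink.
  case sk: (is_sink H0 a).
    have n1 := sinkP b sk.
    have ab1 : (a, b) \in reflect_at H0 a by rewrite inE eqxx /=; move: X; rewrite (negbTE n1).
    have nsrc : is_source (reflect_at H0 a) b = false.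
      by apply/negP => /(srcP a); rewrite ab1.
    rewrite nsrc /= => U D sk2; rewrite sk2 in D; clear -U D; lia.
  rewrite /source_or_sink sk orbF in sa.
  have n1 := srcP b sa.
  have ab1 : (b, a) \in reflect_at H0 a by rewrite inE eqxx orbT /=; move: X; rewrite (negbTE n1) addbF.
  have nsk : is_sink (reflect_at H0 a) b = false.
    by apply/negP => /(sinkP a); rewrite ab1.
  rewrite nsk /= => U D _; clear -U D; lia.
have nba' : ~~ adj b a by rewrite adj_sym.
have sink_b : is_sink (reflect_at H0 a) b = is_sink H0 b := sink_other oH0 nba' nba.
have src_b : is_source (reflect_at H0 a) b = is_source H0 b := source_other oH0 nba' nba.
have sink_a : is_sink (reflect_at H0 b) a = is_sink H0 a := sink_other oH0 nadj nab.
have src_a : is_source (reflect_at H0 b) a = is_source H0 a := source_other oH0 nadj nab.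
have vw' : valid G (p ++ b :: a :: q).
  rewrite valid_cat vp /= -/H0.
  move: sb; rewrite /source_or_sink sink_b src_b => -> /=.
  rewrite sink_a src_a; rewrite /source_or_sink in sa; rewrite sa /=.
  by rewrite reflectC.
exists (p ++ b :: a :: q).
split; first exact: rstep_R2.
split; first done.
have sgb : sgn (reflect_at H0 a) b = sgn H0 b by rewrite /sgn sink_b.
have sga : sgn (reflect_at H0 b) a = sgn H0 a by rewrite /sgn sink_a.
have Eu : upd (upd c0 b (sgn H0 b)) a (sgn H0 a) = upd (upd c0 a (sgn H0 a)) b (sgn H0 b).
  apply: functional_extensionality => z; rewrite /upd.
  case: (eqVneq z a) => [->|za]; first by rewrite (negbTE nab).
  by case: (eqVneq z b).
split; first by move=> z; rewrite -(fw z) !final_cat /= -/H0 -/c0 sgb sga reflectC Eu.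
right; split; first by rewrite !size_cat.
rewrite !mu_cat /= -/H0 -/c0 sgb sga reflectC Eu.
rewrite sgb in D; have D' := down_upd_other nba D.
rewrite ltn_add2l (dist_up U) -(dist_down D') !addSn ltnS; exact: leqnSn.
Qed.

Lemma final_notin H c w a : a \notin w -> final H c w a = c a.
Proof.
elim: w H c => [|x w IH] H c //=; rewrite in_cons negb_or => /andP[ax aw].
by rewrite IH // /upd (negbTE ax).
Qed.

Lemma main_ind G : is_orientation adj G -> forall n m w, (size w <= n)%N ->
  (mu G z0 w <= m)%N -> valid G w -> (forall z, final G z0 w z = 0) ->
  req adj G w [::].
Proof.
move=> oG; elim=> [|n IHn] m w.
  by case: w => // _ _ _ _; apply: rst_refl.
elim: m w => [|m IHm] w hs hm vw fw.
  case: (eqVneq w [::]) => [->|ne]; first exact: rst_refl.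
  have [w' [st [vw' [fw' hlt]]]] := step_lemma oG vw fw ne.
  apply: (rst_trans _ _ _ w'); first exact: rst_step.
  case: hlt => [lt|[_ lt]]; last by move: lt hm; case: (mu G z0 w).
  by apply: (IHn (mu G z0 w')) => //; rewrite -ltnS; apply: leq_trans hs.
case: (eqVneq w [::]) => [->|ne]; first exact: rst_refl.
have [w' [st [vw' [fw' hlt]]]] := step_lemma oG vw fw ne.
apply: (rst_trans _ _ _ w'); first exact: rst_step.
case: hlt => [lt|[eq lt]].
  by apply: (IHn (mu G z0 w')) => //; rewrite -ltnS; apply: leq_trans hs.
apply: IHm => //; first by rewrite eq.
by rewrite -ltnS; apply: leq_trans hm.
Qed.
End Proof.

Theorem mainTheorem18 (T : finType) (adj : rel T) (G : {set T * T}) (e : seq T) :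
  is_tree adj -> is_orientation adj G ->
  valid G e -> endpt G e = G ->
  ~ req adj G e [::] ->
  (forall e' : seq T, valid G e' -> req adj G e' e -> size e <= size e') ->
  forall i : T, i \in e.
Proof.
move=> [hpos hsym hirr hconn hcyc] oG ve he nreq _ i.
apply/negPn/negP => ni; apply: nreq.
have fi : final G (@z0 T) e i = 0%R by rewrite final_notin.
have fedge : forall a b, adj a b -> final G (@z0 T) e a = final G (@z0 T) e b.
  move=> a b ab.
  have nab : a != b by apply/eqP => eab; move: ab; rewrite eab hirr.
  have := @edge_inv T adj hsym a b e G (@z0 T) oG ve ab nab; rewrite he /z0; lia.
have fall : forall z, final G (@z0 T) e z = 0%R.
  move=> z; have /connectP [p pth ->] := hconn i z.
  elim: p i fi {ni} pth => [|y p IH] x fx //= /andP [xy pth].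
  by apply: IH pth; rewrite -(fedge _ _ xy).
exact: (@main_ind T adj hsym G oG _ _ e (leqnn _) (leqnn _) ve fall).
Qed.
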